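(* Let $q>0$, $q\neq 1$, and let $x(s)=c_1q^{s}+c_2q^{-s}+c_3$ be a lattice with $q^{\mu}:=c_1/c_2$ (when $c_2=0$ or $c_1=0$, i.e. a $q$-linear lattice, see the convention below). Let $\tilde\sigma$ be a polynomial of degree at most $2$ and $\tilde\tau$ a polynomial of degree at most $1$, and put $$\sigma(s)=\tilde\sigma(x(s))-\tfrac12\tilde\tau(x(s))\,\Delta x\!\left(s-\tfrac12\right),\qquad \tau(s)=\tilde\tau(x(s)).$$ Let $A(s)$ be an arbitrary continuous function not vanishing on the interval $(a,b)$ under consideration. Define the operators $$H(s;q):=-\frac{\sqrt{\sigma(-s-\mu+1)\sigma(s)}}{\nabla x(s)}e^{-\partial_s}-\frac{\sqrt{\sigma(-s-\mu)\sigma(s+1)}}{\Delta x(s)}e^{\partial_s}+\left(\frac{\sigma(-s-\mu)}{\Delta x(s)}+\frac{\sigma(s)}{\nabla x(s)}\right)I,$$ $$\mathfrak H(s;q):=\frac{1}{\nabla x_1(s)}\,A(s)\,H(s;q)\,\frac{1}{A(s)},$$ and, for a number $\alpha$, $$\mathfrak a^{\downarrow}_\alpha(s;q):=\frac{A(s)}{\sqrt{\nabla x_1(s)}}\,e^{-\alpha\partial_s}\left(e^{\partial_s}\sqrt{\frac{\sigma(s)}{\nabla x(s)}}-\sqrt{\frac{\sigma(-s-\mu)}{\Delta x(s)}}\right)\frac{1}{A(s)},$$ $$\mathfrak a^{\uparrow}_\alpha(s;q):=\frac{1}{\nabla x_1(s)}\,A(s)\left(\sqrt{\frac{\sigma(s)}{\nabla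 x(s)}}\,e^{-\partial_s}-\sqrt{\frac{\sigma(-s-\mu)}{\Delta x(s)}}\right)e^{\alpha\partial_s}\,\frac{\sqrt{\nabla x_1(s)}}{A(s)}.$$ Then for all $\alpha\in\mathbb C$, $\mathfrak H(s;q)=\mathfrak a^{\uparrow}_\alpha(s;q)\,\mathfrak a^{\downarrow}_\alpha(s;q)$.
   Context: Notation: $\Delta f(s)=f(s+1)-f(s)$, $\nabla f(s)=f(s)-f(s-1)$; $x_1(s):=x(s+\tfrac12)$; $e^{\beta\partial_s}$ is the shift operator $e^{\beta\partial_s}f(s)=f(s+\beta)$; a function written inside an operator product denotes the operator of multiplication by that function, and products of operators are compositions (acting on functions of $s$); $I$ is the identity operator. Convention: if the lattice is $q$-linear ($x(s)=c\,q^{\pm s}+c_3$), then every occurrence of $\sigma(-s-\mu+\beta)$ is to be read as $\sigma(t)+\tau(t)\Delta x(t-\tfrac12)$ evaluated at $t=s-\beta$ (i.e. $\sigma(-s-\mu)$ is replaced by $\sigma(s)+\tau(s)\Delta x(s-1/2)$). Square roots are taken formally (fixed branches). *)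

(* Defs.v *)
From Stdlib Require Import Reals ClassicalDescription.
From Coquelicot Require Import Coquelicot.
Open Scope C_scope.

(* complex power q^s = exp(s ln q) for real q > 0 and complex s *)
Definition qpow (q : R) (s : C) : C :=
  (RtoC (exp (Re s * ln q)) * (cos (Im s * ln q), sin (Im s * ln q)))%C.

Definition half : C := RtoC (/ 2).

Definition lattice (c1 c2 c3 : C) (q : R) (s : C) : C :=
  c1 * qpow q s + c2 * qpow q (- s) + c3.

Definition deltaC (f : C -> C) (s : C) : C := f (s + 1) - f s.
Definition nablaC (f : C -> C) (s : C) : C := f s - f (s - 1).

Definition shalf (x : C -> C) (s : C) : C := x (s + half).

Definition sigmaL (st tt x : C -> C) (s : C) : C :=
  st (x s) - half * tt (x s) * deltaC x (s - half).
Definition tauL (tt x : C -> C) (s : C) : C := tt (x s).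

(* Sm u stands for sigma(-u-mu); in the q-linear case (c1 = 0 or c2 = 0)
   it is read as sigma(u) + tau(u) deltaC x(u - 1/2) (convention of the paper).
   Then sigma(-s-mu+beta) = Sm (s - beta). *)
Definition Sm (c1 c2 mu : C) (st tt x : C -> C) (u : C) : C :=
  if excluded_middle_informative (c1 = 0 \/ c2 = 0)
  then sigmaL st tt x u + tauL tt x u * deltaC x (u - half)
  else sigmaL st tt x (- u - mu).

Definition Op := (C -> C) -> (C -> C).
Definition mulOp (m : C -> C) : Op := fun f s => m s * f s.
Definition shiftOp (b : C) : Op := fun f s => f (s + b).
Definition idOp : Op := fun f => f.
Definition compOp (P Q : Op) : Op := fun f => P (Q f).
Definition addOp (P Q : Op) : Op := fun f s => P f s + Q f s.
Definition subOp (P Q : Op) : Op := fun f s => P f s - Q f s.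
Definition oppOp (P : Op) : Op := fun f s => - P f s.

(* H(s;q), with branch functions:
   p s  = sqrt(sigma(-s-mu+1) sigma(s)),  qq s = sqrt(sigma(-s-mu) sigma(s+1)) *)
Definition Hop (x sigma sm p qq : C -> C) : Op :=
  addOp (subOp (oppOp (compOp (mulOp (fun s => p s / nablaC x s)) (shiftOp (-1))))
               (compOp (mulOp (fun s => qq s / deltaC x s)) (shiftOp 1)))
        (mulOp (fun s => sm s / deltaC x s + sigma s / nablaC x s)).

Definition frakH (x sigma sm p qq A : C -> C) : Op :=
  compOp (mulOp (fun s => / nablaC (shalf x) s))
   (compOp (mulOp A) (compOp (Hop x sigma sm p qq) (mulOp (fun s => / A s)))).

(* branch functions: r s = sqrt(sigma(s)/nablaC x(s)), l s = sqrt(sigma(-s-mu)/deltaC x(s)),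
   sx s = sqrt(nablaC x_1(s)) *)
Definition adown (A r l sx : C -> C) (alpha : C) : Op :=
  compOp (mulOp (fun s => A s / sx s))
   (compOp (shiftOp (- alpha))
     (compOp (subOp (compOp (shiftOp 1) (mulOp r)) (mulOp l))
             (mulOp (fun s => / A s)))).

Definition aup (x A r l sx : C -> C) (alpha : C) : Op :=
  compOp (mulOp (fun s => / nablaC (shalf x) s))
   (compOp (mulOp A)
     (compOp (subOp (compOp (mulOp r) (shiftOp (-1))) (mulOp l))
       (compOp (shiftOp alpha) (mulOp (fun s => sx s / A s))))).

(* Main.v *)
Require Import Defs.
From Stdlib Require Import Reals.
From Coquelicot Require Import Coquelicot.
Open Scope C_scope.

Lemma key_lemma : forall (A r l sx p qq f N sig sm dx nx: C -> C) (s alpha : C),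
  (forall z, A z <> 0) ->
  (forall z, r z * r z = sig z / nx z) ->
  (forall z, l z * l z = sm z / dx z) ->
  (forall z, sx z * sx z = N z) ->
  (forall z, p z / nx z = r z * l (z - 1)) ->
  (forall z, qq z / dx z = l z * r (z + 1)) ->
  N (s + alpha) <> 0 -> N (s+alpha-1) <> 0 ->
  / N s * (A s * (- (p s / nx s * (/ A (s + -1) * f (s + -1))) - qq s / dx s * (/ A (s + 1) * f (s + 1)) + (sm s / dx s + sig s / nx s) * (/ A s * f s)))
 = / N s * (A s * (r s * (sx (s + -1 + alpha) / A (s + -1 + alpha) * (A (s + -1 + alpha) / sx (s + -1 + alpha) * (r (s + -1 + alpha + - alpha + 1) * (/ A (s + -1 + alpha + - alpha + 1) * f (s + -1 + alpha + - alpha + 1)) - l (s + -1 + alpha + - alpha) * (/ A (s + -1 + alpha + - alpha) * f (s + -1 + alpha + - alpha))))) - l s * (sx (s + alpha) / A (s + alpha) * (A (s + alpha) / sx (s + alpha) * (r (s + alpha + - alpha + 1) * (/ A (s + alpha + - alpha + 1) * f (s + alpha + - alpha + 1)) - l (s + alpha + - alpha) * (/ A (s + alpha + - alpha) * f (s + alpha + - alpha))))))).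
Proof.
intros A r l sx p qq f N sig sm dx nx s alpha HA Hr Hl Hsx Hp Hq H1 H2.
assert (E1: s + -1 + alpha = s + alpha - 1) by ring.
assert (E2: s + -1 + alpha + - alpha + 1 = s) by ring.
assert (E3: s + -1 + alpha + - alpha = s - 1) by ring.
assert (E4: s + alpha + - alpha + 1 = s + 1) by ring.
assert (E5: s + alpha + - alpha = s) by ring.
assert (E6: s + -1 = s - 1) by ring.
rewrite E2, E3, E4, E5, E1, E6. apply f_equal.
assert (S1: sx (s+alpha) <> 0). { intro h. apply H1. rewrite <- Hsx, h. ring. }
assert (S2: sx (s+alpha-1) <> 0). { intro h. apply H2. rewrite <- Hsx, h. ring. }
replace (sm s / dx s + sig s / nx s) with (r s * r s + l s * l s) by (rewrite Hr, Hl; ring).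
rewrite Hp, Hq.
pose proof (HA s). pose proof (HA (s-1)). pose proof (HA (s+1)). pose proof (HA (s+alpha)). pose proof (HA (s+alpha-1)).
field; repeat split; auto.
Qed.

Theorem theorem1 (q : R) (c1 c2 c3 mu : C) (a2 a1 a0 b1 b0 : C)
  (A r l sx p qq : C -> C) :
  (0 < q)%R -> q <> 1%R ->
  (c1 <> 0 -> c2 <> 0 -> qpow q mu = c1 / c2) ->
  let x := lattice c1 c2 c3 q in
  let st := fun z => a2 * z * z + a1 * z + a0 in
  let tt := fun z => b1 * z + b0 in
  let sigma := sigmaL st tt x in
  let sm := Sm c1 c2 mu st tt x in
  (forall z, A z <> 0) ->
  (* square roots with fixed branches *)
  (forall z, r z * r z = sigma z / nablaC x z) ->
  (forall z, l z * l z = sm z / deltaC x z) ->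
  (forall z, sx z * sx z = nablaC (shalf x) z) ->
  (forall z, p z * p z = sm (z - 1) * sigma z) ->
  (forall z, qq z * qq z = sm z * sigma (z + 1)) ->
  (* formal (consistent) branch choice of the product square roots *)
  (forall z, p z / nablaC x z = r z * l (z - 1)) ->
  (forall z, qq z / deltaC x z = l z * r (z + 1)) ->
  forall (alpha : C) (f : C -> C) (s : C),
    nablaC (shalf x) (s + alpha) <> 0 ->
    nablaC (shalf x) (s + alpha - 1) <> 0 ->
    frakH x sigma sm p qq A f s = compOp (aup x A r l sx alpha) (adown A r l sx alpha) f s.
Proof.
intros. unfold frakH, aup, adown, Hop, compOp, mulOp, shiftOp, addOp, subOp, oppOp.
clearbody x sigma sm.
apply (key_lemma A r l sx p qq f (nablaC (shalf x)) sigma sm (deltaC x) (nablaC x)); auto.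
Qed.
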